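(* Let $f:\mathbb{Z}^n\to\mathbb{R}\cup\{+\infty\}$ be a function satisfying condition (SSQM$^\natural$) with $\arg\min f\neq\emptyset$, and let $x\in\mathrm{dom}\,f$ with $x\notin\arg\min f$. Let $(i,j)$ be a pair of distinct elements of $N\cup\{0\}$ minimizing the value $f(x-\chi_i+\chi_j)$. Then there exists a minimizer $x^*$ of $f$ satisfying: - if $i,j\in N$: $x^*(i)\le x(i)-1$ and $x^*(j)\ge x(j)+1$; - if $i\in N$ and $j=0$: $x^*(i)\le x(i)-1$; - if $i=0$ and $j\in N$: $x^*(j)\ge x(j)+1$.
   Context: $N=\{1,\dots,n\}$. For $i\in N$, $\chi_i\in\{0,1\}^n$ is the characteristic vector of $i$, and $\chi_0=0$. $\mathrm{dom}\,f=\{x\in\mathbb{Z}^n\mid f(x)<+\infty\}$. For $x,y\in\mathbb{Z}^n$, $\mathrm{supp}^+(x-y)=\{i\in N\mid x(i)>y(i)\}$ and $\mathrm{supp}^-(x-y)=\{j\in N\mid x(j)<y(j)\}$. Condition (SSQM$^\natural$): for all $x,y\in\mathrm{dom}\,f$ and all $i\in\mathrm{supp}^+(x-y)$ there exists $j\in\mathrm{supp}^-(x-y)\cup\{0\}$ such that at least one of the following holds: (a) $f(x-\chi_i+\chi_j)<f(x)$; (b) $f(y+\chi_i-\chi_j)<f(y)$; (c) $f(x-\chi_i+\chi_j)=f(x)$ and $f(y+\chi_i-\chi_j)=f(y)$. *)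

(* Defs.v *)
From HB Require Import structures.
From mathcomp Require Import all_boot all_order all_algebra.
From mathcomp Require Import reals constructive_ereal.
Set Implicit Arguments. Unset Strict Implicit. Unset Printing Implicit Defensive.
Import Order.TTheory GRing.Theory Num.Theory.
Local Open Scope ring_scope.
Local Open Scope ereal_scope.

(* Points of Z^n are functions 'I_n -> int.  The index set N ∪ {0} is
   option 'I_n, with None standing for the index 0. *)
Definition zvec (n : nat) := 'I_n -> int.

Definition chi (n : nat) (i : option 'I_n) : zvec n :=
  fun k => match i with Some i0 => ((k == i0) : nat)%:Z | None => 0%R end.

Definition exch (n : nat) (x : zvec n) (i j : option 'I_n) : zvec n :=
  fun k => (x k - chi i k + chi j k)%R.

Definition exch' (n : nat) (y : zvec n) (i j : option 'I_n) : zvec n :=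
  fun k => (y k + chi i k - chi j k)%R.

Definition in_dom (R : realDomainType) (n : nat) (f : zvec n -> \bar R) (x : zvec n) :=
  f x < +oo.

Definition SSQMnat (R : realDomainType) (n : nat) (f : zvec n -> \bar R) : Prop :=
  forall x y : zvec n, in_dom f x -> in_dom f y ->
  forall i : 'I_n, (y i < x i)%R ->
  exists j : option 'I_n,
    (match j with None => true | Some j0 => (x j0 < y j0)%R end) /\
    [\/ f (exch x (Some i) j) < f x,
        f (exch' y (Some i) j) < f y
      | f (exch x (Some i) j) = f x /\ f (exch' y (Some i) j) = f y].

Definition is_argmin (R : realDomainType) (n : nat) (f : zvec n -> \bar R) (x : zvec n) :=
  in_dom f x /\ forall y, f x <= f y.

(* Main.v *)
Require Import Defs.
From HB Require Import structures.
From mathcomp Require Import all_boot all_order all_algebra.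
From mathcomp Require Import reals constructive_ereal.
From mathcomp Require Import zify.
From Stdlib Require Import Classical FunctionalExtensionality.
Import Order.TTheory GRing.Theory Num.Theory.
Local Open Scope ring_scope.
Local Open Scope ereal_scope.

Definition dist {n : nat} (z t : zvec n) : nat :=
  (\sum_(k < n) absz ((z k - t k)%R))%N.

Lemma ex_closest (T : Type) (P : T -> Prop) (d : T -> nat) :
  (exists z, P z) -> exists z, P z /\ forall w, P w -> (d z <= d w)%N.
Proof.
move=> [z Pz]; move: (leqnn (d z)); move: {2}(d z) => m.
elim: m z Pz => [|m IH] z Pz Hd.
  exists z; split => // w _; lia.
case: (classic (exists w, P w /\ (d w < d z)%N)) => [[w [Pw Hw]]|H].
  apply: (IH w Pw); lia.
exists z; split => // w Pw; case: (leqP (d z) (d w)) => // Hlt.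
by exfalso; apply: H; exists w.
Qed.

Lemma dist_lt (n : nat) (z w t : zvec n) (k : 'I_n) :
  (forall m : 'I_n, (absz ((w m - t m)%R) <= absz ((z m - t m)%R))%N) ->
  (absz ((w k - t k)%R) < absz ((z k - t k)%R))%N ->
  (dist w t < dist z t)%N.
Proof.
move=> H Hk; rewrite /dist (bigD1 k) //= [X in (_ < X)%N](bigD1 k) //=.
have Hs : (\sum_(m < n | m != k) absz ((w m - t m)%R) <=
           \sum_(m < n | m != k) absz ((z m - t m)%R))%N.
  by apply: leq_sum => m _; exact: H m.
move: Hk Hs; set A := (\sum_(_ < _ | _) _)%N; set B := (\sum_(_ < _ | _) _)%N. lia.
Qed.

Lemma L1 (n : nat) (z t : zvec n) (k : 'I_n) (l : option 'I_n) :
  (t k < z k)%R ->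
  (match l with None => is_true true | Some l0 => is_true (z l0 < t l0)%R end) ->
  (dist (exch z (Some k) l) t < dist z t)%N.
Proof.
move=> Hk Hl; apply: (@dist_lt _ _ _ _ k); rewrite /exch /chi.
  move=> m; case: l Hl => [l0|] Hl /=.
    have kl : k != l0 by apply/eqP => e; subst; lia.
    case: (eqVneq m k) => [->|mk]; first by rewrite ?eqxx ?(negbTE kl) /=; lia.
    case: (eqVneq m l0) => [->|ml] /=; first by rewrite ?eqxx; lia.
    rewrite ?(negbTE mk) ?(negbTE ml) /=; lia.
  case: (eqVneq m k) => [->|mk] /=; lia.
case: l Hl => [l0|] Hl /=; last by rewrite ?eqxx /=; lia.
have kl : k != l0 by apply/eqP => e; subst; lia.
rewrite ?eqxx ?(negbTE kl) /=; lia.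
Qed.

Lemma L2 (n : nat) (z t : zvec n) (k : 'I_n) (l : option 'I_n) :
  (z k < t k)%R ->
  (match l with None => is_true true | Some l0 => is_true (t l0 < z l0)%R end) ->
  (dist (exch' z (Some k) l) t < dist z t)%N.
Proof.
move=> Hk Hl; apply: (@dist_lt _ _ _ _ k); rewrite /exch' /chi.
  move=> m; case: l Hl => [l0|] Hl /=.
    have kl : k != l0 by apply/eqP => e; subst; lia.
    case: (eqVneq m k) => [->|mk]; first by rewrite ?eqxx ?(negbTE kl) /=; lia.
    case: (eqVneq m l0) => [->|ml] /=; first by rewrite ?eqxx; lia.
    rewrite ?(negbTE mk) ?(negbTE ml) /=; lia.
  case: (eqVneq m k) => [->|mk] /=; lia.
case: l Hl => [l0|] Hl /=; last by rewrite ?eqxx /=; lia.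
have kl : k != l0 by apply/eqP => e; subst; lia.
rewrite ?eqxx ?(negbTE kl) /=; lia.
Qed.

Lemma exch_same n (x : zvec n) k : exch x k k = x.
Proof. apply: functional_extensionality => m; rewrite /exch; lia. Qed.

Lemma exch'_exch n (x : zvec n) k l : exch' x k l = exch x l k.
Proof. apply: functional_extensionality => m; rewrite /exch /exch'; lia. Qed.

Lemma exch'_exch2 n (x : zvec n) a j l : exch' (exch x a j) a l = exch x l j.
Proof. apply: functional_extensionality => m; rewrite /exch /exch'; lia. Qed.

Lemma exch_exch2 n (x : zvec n) i b l : exch (exch x i b) b l = exch x i l.
Proof. apply: functional_extensionality => m; rewrite /exch /exch'; lia. Qed.

Theorem theorem2p9 (R : realType) (n : nat) (f : zvec n -> \bar R)
  (f_noninf : forall z, f z != -oo)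
  (hf : SSQMnat f)
  (hmin : exists z, is_argmin f z)
  (x : zvec n) (hx : in_dom f x) (hxnot : ~ is_argmin f x)
  (i j : option 'I_n) (hij : i != j)
  (hbest : forall i' j' : option 'I_n, i' != j' ->
      f (exch x i j) <= f (exch x i' j')) :
  exists xs : zvec n, is_argmin f xs /\
    (forall i0 : 'I_n, i = Some i0 -> (xs i0 <= x i0 - 1)%R) /\
    (forall j0 : 'I_n, j = Some j0 -> (x j0 + 1 <= xs j0)%R).
Proof.
have [z0 Hz0] := hmin.
have [w hw] : exists w, f w < f x.
  apply: NNPP => H; apply: hxnot; split => // w.
  rewrite leNgt; apply/negP => h; apply: H; exists w; exact: h.
have fz0x : f z0 < f x := le_lt_trans (Hz0.2 w) hw.
have fyx : f (exch x i j) < f x.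
  have [z [[zd zmin] zcl]] := @ex_closest _ (fun z => is_argmin f z)
     (fun z => dist z x) (ex_intro _ z0 Hz0).
  have fzx : f z < f x := le_lt_trans (zmin z0) fz0x.
  suff [k [l [kl Hkl]]] : exists k l, k != l /\ f (exch x k l) < f x.
    exact: le_lt_trans (hbest k l kl) Hkl.
  have [k Hk] : exists k, x k != z k.
    apply: NNPP => H.
    have e : x = z.
      apply: functional_extensionality => m.
      case: (eqVneq (x m) (z m)) => // h; exfalso; apply: H; exists m; exact: h.
    by move: fzx; rewrite e ltxx.
  case: (ltgtP (x k) (z k)) => H; last by rewrite H eqxx in Hk.
  - have [l [Hl Hc]] := hf z x zd hx k H.
    case: Hc => [Ha|Hb|[Hc1 Hc2]].
    + by have := le_lt_trans (zmin _) Ha; rewrite ltxx.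
    + exists l, (Some k); split; last by rewrite -exch'_exch.
      case: l Hl {Hb} => [l0|] //= Hl; apply/eqP => [[e]]; subst; move: Hl H.
      by move=> /lt_trans h /h; rewrite ltxx.
    + have am : is_argmin f (exch z (Some k) l).
        by split; [rewrite /in_dom Hc1; exact: zd | move=> v; rewrite Hc1; exact: zmin].
      have := zcl _ am; have := @L1 _ _ _ _ _ H Hl; lia.
  - have [l [Hl Hc]] := hf x z hx zd k H.
    case: Hc => [Ha|Hb|[Hc1 Hc2]].
    + exists (Some k), l; split => //.
      case: l Hl {Ha} => [l0|] //= Hl; apply/eqP => [[e]]; subst; move: Hl H.
      by move=> /lt_trans h /h; rewrite ltxx.
    + by have := le_lt_trans (zmin _) Hb; rewrite ltxx.
    + have am : is_argmin f (exch' z (Some k) l).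
        by split; [rewrite /in_dom Hc2; exact: zd | move=> v; rewrite Hc2; exact: zmin].
      have := zcl _ am; have := @L2 _ _ _ _ _ H Hl; lia.
have yd : in_dom f (exch x i j) := lt_trans fyx hx.
have [z [[zd zmin] zcl]] := @ex_closest _ (fun z => is_argmin f z)
   (fun z => dist z (exch x i j)) (ex_intro _ z0 Hz0).
exists z; split => //; split.
- move=> i0 ei.
  have yi0 : exch x i j i0 = (x i0 - 1)%R.
    rewrite /exch /chi ei eqxx; case Ej: j => [j0|] /=; last by lia.
    have : i0 != j0 by move: hij; rewrite ei Ej; apply: contraNneq => ->.
    by move/negbTE; rewrite eq_sym => ->; lia.
  rewrite -yi0 leNgt; apply/negP => H.
  have [l [Hl Hc]] := hf z (exch x i j) zd yd i0 H.
  case: Hc => [Ha|Hb|[Hc1 Hc2]].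
  + by have := le_lt_trans (zmin _) Ha; rewrite ltxx.
  + move: Hb; rewrite {1}ei exch'_exch2.
    case: (eqVneq l j) => [->|lj].
      by rewrite exch_same => /lt_trans h; have := h _ fyx; rewrite ltxx.
    by move=> h; have := lt_le_trans h (hbest _ _ lj); rewrite ltxx.
  + have am : is_argmin f (exch z (Some i0) l).
      by split; [rewrite /in_dom Hc1; exact: zd | move=> v; rewrite Hc1; exact: zmin].
    have := zcl _ am; have := @L1 _ _ _ _ _ H Hl; lia.
- move=> j0 ej.
  have yj0 : exch x i j j0 = (x j0 + 1)%R.
    rewrite /exch /chi ej eqxx; case Ei: i => [i0|] /=; last by lia.
    have : j0 != i0 by move: hij; rewrite ej Ei; apply: contraNneq => ->.
    by move/negbTE; rewrite eq_sym => ->; lia.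
  rewrite -yj0 leNgt; apply/negP => H.
  have [l [Hl Hc]] := hf (exch x i j) z yd zd j0 H.
  case: Hc => [Ha|Hb|[Hc1 Hc2]].
  + move: Ha; rewrite {1}ej exch_exch2.
    case: (eqVneq i l) => [<-|il].
      by rewrite exch_same => /lt_trans h; have := h _ fyx; rewrite ltxx.
    by move=> h; have := lt_le_trans h (hbest _ _ il); rewrite ltxx.
  + by have := le_lt_trans (zmin _) Hb; rewrite ltxx.
  + have am : is_argmin f (exch' z (Some j0) l).
      by split; [rewrite /in_dom Hc2; exact: zd | move=> v; rewrite Hc2; exact: zmin].
    have := zcl _ am; have := @L2 _ _ _ _ _ H Hl; lia.
Qed.
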